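(* Let $A$ be a connectivity class of external positions, all of whose positions $p$ have $|B(p)|=m$ and sorted characteristics $j_1\le\dots\le j_{n-m}$. For $S\subseteq\{1,\dots,n\}$ with $|S|=m$ and $\varepsilon:S\to\{0,k-1\}$ put $Cl(S,\varepsilon)=\{p\in A: B(p)=S,\ p_s=\varepsilon(s)\ \forall s\in S\}$. Then $A$ is the disjoint union of the sets $Cl(S,\varepsilon)$; in the solved coloring, the cubies in two positions of $A$ have the same coloring if and only if the positions lie in the same set $Cl(S,\varepsilon)$. Moreover, if $A$ is not central, every nonempty $Cl(S,\varepsilon)$ contains at least two positions (so is a cluster), while if $A$ is central every nonempty $Cl(S,\varepsilon)$ consists of a single position.
   Context: Fix integers $k\ge 2$, $n\ge 3$, $M=\{0,\dots,k-1\}$. Positions are $p\in M^n$, the cubie at $p$ being $\prod_i[p_i,p_i+1]\subset[0,k]^n$; $B(p)=\{i:p_i\in\{0,k-1\}\}$, $p$ external if $B(p)\ne\emptyset$. For $x\in\{1,\dots,k-2\}$, $\bar x=\min(x,k-1-x)$; the characteristics of $p$ are the values $\bar p_i$, $i\notin B(p)$, sorted non-decreasingly. For distinct $i,j$, $\psi_{i,j}:M^n\to M^n$ is $(\psi_{i,j}p)_i=k-1-p_j$, $(\psi_{i,j}p)_j=p_i$, other coordinates unchanged. A move is given by distinct $i,j$ and constants $c_l\in M$ ($l\notin\{i,j\}$) and applies $\psi_{i,j}$ to all positions $p$ with $p_l=c_l$ ($l\notin\{i,j\}$), fixing the others; a combination is a finite sequence of moves. Connectivity classes are the orbits of external positions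 under combinations (all positions in one class have the same $|B(p)|$ and the same characteristics). A class is central if all its characteristics equal $(k-1)/2$ (vacuously true when $m=n$). Solved coloring: for each $t$ with $2\le t\le n-1$, each $t$-dimensional face $\{x\in[0,k]^n: x_s=e_s\ (s\in S)\}$ ($|S|=n-t$, $e_s\in\{0,k\}$) of the big cube gets its own color, distinct faces getting distinct colors, and each $t$-dimensional face of a cubie contained in a $t$-face of the big cube receives that face's color. Two cubies have the same coloring if the sets of colors on them coincide. A cluster is the set of all cubies of one class having the same coloring, provided it has more than one element. *)

(* Defs.v *)
From mathcomp Require Import all_boot all_order all_algebra.
Set Implicit Arguments. Unset Strict Implicit. Unset Printing Implicit Defensive.
Import Order.TTheory GRing.Theory Num.Theory.

Section Cube.
Variables k n : nat.

Definition pos := {ffun 'I_n -> 'I_k}.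

Definition Bset (p : pos) : {set 'I_n} :=
  [set i | ((p i : nat) == 0) || ((p i : nat) == k.-1)].

Definition external (p : pos) : bool := Bset p != set0.

(* psi_{i,j}: (psi p)_i = k-1-p_j, (psi p)_j = p_i, others unchanged.
   rev_ord x has value k - x.+1 = k-1-x. *)
Definition psi (i j : 'I_n) (p : pos) : pos :=
  [ffun l => if l == i then rev_ord (p j) else if l == j then p i else p l].

Definition apply_move (i j : 'I_n) (c : {ffun 'I_n -> 'I_k}) (p : pos) : pos :=
  if [forall l, ((l != i) && (l != j)) ==> (p l == c l)] then psi i j p else p.

Definition move_rel : rel pos :=
  fun p q => [exists i : 'I_n, exists j : 'I_n, exists c : {ffun 'I_n -> 'I_k},
                (i != j) && (apply_move i j c p == q)].

Definition cclass (p0 : pos) : {set pos} := [set q | connect move_rel p0 q].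

Definition bar (x : nat) : nat := minn x (k.-1 - x).
Definition chars (p : pos) : seq nat :=
  sort leq [seq bar (p i) | i <- enum (~: Bset p)].

(* central: all characteristics equal (k-1)/2, i.e. 2c+1 = k *)
Definition central (A : {set pos}) : bool :=
  [forall p in A, all (fun c => c.*2.+1 == k) (chars p)].

(* epsilon : S -> {0, k-1} encoded by e : 'I_n -> bool
   (false |-> 0, true |-> k-1); only values on S matter *)
Definition epsv (b : bool) : nat := if b then k.-1 else 0.

Definition Cl (A : {set pos}) (S : {set 'I_n}) (e : 'I_n -> bool) : {set pos} :=
  [set p in A | (Bset p == S) && [forall s in S, (p s : nat) == epsv (e s)]].

Local Open Scope ring_scope.

Definition in_cubie_face (p : pos) (T : {set 'I_n}) (f : 'I_n -> bool)
  (x : 'I_n -> rat) : Prop :=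
  forall i, if i \in T then ((p i)%:R <= x i) && (x i <= (p i)%:R + 1)
            else x i == (p i)%:R + (f i)%:R.

Definition in_big_face (S : {set 'I_n}) (e : 'I_n -> bool) (x : 'I_n -> rat) : Prop :=
  (forall i, (0 <= x i) && (x i <= k%:R)) /\
  (forall s, s \in S -> x s = if e s then k%:R else 0).

(* the cubie at p carries the color of the big (n-#|S|)-face (S,e)
   (where 2 <= n-#|S| <= n-1) iff some (n-#|S|)-face of the cubie
   is contained in that big face *)
Definition has_color (p : pos) (S : {set 'I_n}) (e : 'I_n -> bool) : Prop :=
  (0 < #|S|)%N /\ (#|S| + 2 <= n)%N /\
  exists (T : {set 'I_n}) (f : 'I_n -> bool),
    #|T| = (n - #|S|)%N /\
    (forall x, in_cubie_face p T f x -> in_big_face S e x).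

(* same coloring: same set of colors (colors = big faces, so (S,e) and
   (S,e') with e = e' on S are the same color; has_color respects this) *)
Definition same_coloring (p q : pos) : Prop :=
  forall S e, has_color p S e <-> has_color q S e.

End Cube.

(* Main.v *)
Require Import Defs.
From mathcomp Require Import all_boot all_order all_algebra.
From mathcomp Require Import perm zify.
Set Implicit Arguments. Unset Strict Implicit. Unset Printing Implicit Defensive.
Import Order.TTheory GRing.Theory Num.Theory.

Section Aux.
Variables k n : nat.
Implicit Types p q : pos k n.

Lemma inv_connect (T : Type) (f : pos k n -> T) :
  forall p q, connect (@move_rel k n) p q -> 
  (forall p q, @move_rel k n p q -> f p = f q) -> f p = f q.
Proof.
move=> p q + H; move=> /connectP [s]; elim: s p => [|r s IH] p /=; first by move=> _ ->.
by case/andP=> /H -> /IH.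
Qed.

Lemma move_cases p q : @move_rel k n p q ->
  q = p \/ exists i j, i != j /\ q = psi i j p.
Proof.
case/existsP=> i /existsP [j /existsP [c /andP [nij /eqP <-]]].
rewrite /apply_move; case: ifP=> _; [right; exists i, j | left]; by [].
Qed.

Lemma psi_move p i j : i != j -> @move_rel k n p (psi i j p).
Proof.
move=> nij; apply/existsP; exists i; apply/existsP; exists j; apply/existsP; exists p.
rewrite nij /apply_move /=; case: ifP=> // /negP []; apply/forallP=> l; exact/implyP.
Qed.

Lemma cclass_psi p0 p i j : p \in cclass p0 -> i != j -> psi i j p \in cclass p0.
Proof.
rewrite !inE => H nij; apply: connect_trans H (connect1 _); exact: psi_move.
Qed.

Definition bnd (v : nat) := (v == 0) || (v == k.-1).
Definition good (v : nat) := [|| v == 0, v == k.-1 | v.*2.+1 == k].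

Lemma bnd_rev (x : 'I_k) : bnd (rev_ord x) = bnd x.
Proof. rewrite /bnd /=; have := ltn_ord x; lia. Qed.
Lemma good_rev (x : 'I_k) : good (rev_ord x) = good x.
Proof. rewrite /good /=; have := ltn_ord x; rewrite -!addnn; lia. Qed.

Lemma inB p i : (i \in Bset p) = bnd (p i).
Proof. by rewrite inE. Qed.

Lemma card_B_psi p i j : i != j -> #|Bset (psi i j p)| = #|Bset p|.
Proof.
move=> nij; rewrite -(card_preimset (Bset p) (@perm_inj _ (tperm i j))).
apply: eq_card => x; rewrite !inE ffunE.
case: (eqVneq x i) => [->|nxi].
  by rewrite tpermL; have := bnd_rev (p j).

case: (eqVneq x j) => [->|nxj]; first by rewrite tpermR.
by rewrite tpermD // eq_sym.
Qed.

Definition allgood p := [forall x, good (p x)].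

Lemma allgood_psi p i j : i != j -> allgood (psi i j p) = allgood p.
Proof.
move=> nij; apply/forallP/forallP => H x.
- case: (eqVneq x i) => [->|nxi].
    by have := H j; rewrite ffunE eq_sym (negbTE nij) eqxx.
  case: (eqVneq x j) => [->|nxj].
    by have := H i; rewrite ffunE eqxx good_rev.
  by have := H x; rewrite ffunE (negbTE nxi) (negbTE nxj).
- rewrite ffunE; case: (eqVneq x i) => [_|nxi]; first by rewrite good_rev.
  by case: (eqVneq x j).
Qed.

Lemma card_B_inv p0 p : p \in cclass p0 -> #|Bset p| = #|Bset p0|.
Proof.
rewrite inE => H; symmetry; have := @inv_connect _ (fun p : pos k n => #|Bset p|) _ _ H; apply => a b /move_cases [->|[i [j [nij ->]]]] //.
by rewrite card_B_psi.
Qed.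

Lemma allgood_inv p0 p : p \in cclass p0 -> allgood p = allgood p0.
Proof.
rewrite inE => H; symmetry; have := @inv_connect _ (fun p : pos k n => allgood p) _ _ H; apply => a b /move_cases [->|[i [j [nij ->]]]] //.
by rewrite allgood_psi.
Qed.

End Aux.
Section Col.
Variables k n : nat.
Hypothesis hk : (2 <= k)%N.
Implicit Types p q : pos k n.
Local Open Scope ring_scope.

Lemma has_colorP p S e : has_color p S e <->
  [/\ (0 < #|S|)%N, (#|S| + 2 <= n)%N &
      forall s, s \in S -> (p s : nat) = epsv k (e s)].
Proof.
split.
- case=> h1 [h2 [T [f [_ H]]]]; split=> // s sS.
  pose x0 : 'I_n -> rat := fun i => if i \in T then (p i)%:R else (p i)%:R + (f i)%:R.
  have Hx0 : in_cubie_face p T f x0.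
    move=> i; rewrite /x0; case: (i \in T) => //.
    by rewrite lexx lerDl ler01.
  have [_ /(_ s sS)] := H _ Hx0; rewrite /x0.
  case: ifP => sT.
    pose x1 : 'I_n -> rat := fun i => if i \in T then (p i)%:R + 1 else (p i)%:R + (f i)%:R.
    have Hx1 : in_cubie_face p T f x1.
      move=> i; rewrite /x1; case: (i \in T) => //.
      by rewrite lexx lerDl ler01.
    have [_ /(_ s sS)] := H _ Hx1; rewrite /x1 sT => E1 E0; move/eqP: E1.
    by rewrite -E0 -subr_eq0 addrC addKr oner_eq0.
  rewrite -natrD; have := ltn_ord (p s); rewrite /epsv.
  case: (e s) => lt /eqP; rewrite ?eqr_nat ?pnatr_eq0 => /eqP; case: (f s) lt => /=; lia.
- case=> h1 h2 H; split=> //; split=> //; exists (~: S), e; split.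
    by rewrite cardsCs card_ord setCK.
  move=> x Hx; split.
    move=> i; have := Hx i; rewrite inE; case: (boolP (i \in S)) => iS /=.
      rewrite /= => /eqP ->; rewrite -natrD ler0n ler_nat H //.
      have := ltn_ord (p i); rewrite /epsv; case: (e i) => /=; lia.
    case/andP => h3 h4; rewrite (le_trans _ h3) ?ler0n //=.
    by rewrite (le_trans h4) // natr1 ler_nat.
  move=> s sS; have := Hx s; rewrite inE sS /= => /eqP ->.
  rewrite H // /epsv; case: (e s) => /=; rewrite ?addr0 //.
  by rewrite natr1 prednK //; lia.
Qed.

End Col.

Section Main.
Variables k n : nat.
Hypothesis hk : (2 <= k)%N.
Hypothesis hn : (3 <= n)%N.
Implicit Types p q : pos k n.

Lemma ClE (A : {set pos k n}) S e p : (p \in Cl A S e) =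
  [&& p \in A, Bset p == S & [forall s in S, (p s : nat) == epsv k (e s)]].
Proof. by rewrite inE. Qed.

Definition esig p := fun y : 'I_n => (p y : nat) == k.-1.

Lemma epsv_esig p s : s \in Bset p -> epsv k (esig p s) = p s.
Proof. rewrite inB /bnd /esig /epsv; case: ifP => /eqP; lia. Qed.

Lemma in_Cl_self (A : {set pos k n}) p : p \in A -> p \in Cl A (Bset p) (esig p).
Proof.
move=> pA; rewrite ClE pA eqxx /=; apply/forallP => s; apply/implyP => sB.
by rewrite epsv_esig.
Qed.

Lemma epsv_bnd b : bnd k (epsv k b).
Proof. by rewrite /bnd /epsv; case: b; rewrite eqxx ?orbT. Qed.

Lemma epsv_inj a b : epsv k a = epsv k b -> a = b.
Proof. rewrite /epsv; case: a; case: b => //=; lia. Qed.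

Lemma agree_color p q S e : Bset p = Bset q -> (forall s, s \in Bset p -> (p s : nat) = q s) ->
  has_color p S e -> has_color q S e.
Proof.
move=> EB Eq /(has_colorP hk) [h1 h2 H]; apply/(has_colorP hk); split=> // s sS.
have sB : s \in Bset p by rewrite inB H // epsv_bnd.
by rewrite -Eq // H.
Qed.

Lemma sc_sub p q : same_coloring p q -> forall s, s \in Bset p -> (q s : nat) = p s.
Proof.
move=> H s sB.
have : has_color p [set s] (esig p).
  apply/(has_colorP hk); rewrite cards1; split; [by [] | lia | ].
  by move=> s'; rewrite inE => /eqP ->; rewrite epsv_esig.
move/(H _ _)/(has_colorP hk) => [_ _ Hq]; rewrite Hq ?set11 //.
by rewrite epsv_esig.
Qed.

Lemma three (x : 'I_n) : exists j l : 'I_n, [/\ j != x, l != x & j != l].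
Proof.
have h0 : (0 < n)%N by lia. have h1 : (1 < n)%N by lia. have h2 : (2 < n)%N by lia.
pose a := Ordinal h0; pose b := Ordinal h1; pose c := Ordinal h2.
have ne : forall u v : 'I_n, (u : nat) != v -> u != v.
  by move=> u v; apply: contra => /eqP ->.
case: (eqVneq (x : nat) 0) => x0.
  exists b, c; split; apply: ne => //=; lia.
case: (eqVneq (x : nat) 1) => x1.
  exists a, c; split; apply: ne => //=; lia.
exists a, b; split; apply: ne => //=; lia.
Qed.

Lemma rev_ne (a : 'I_k) : ~~ good k a -> rev_ord a != a.
Proof.
rewrite /good -addnn => H; apply/eqP => /(congr1 val) /=; move: H.
have := ltn_ord a; lia.
Qed.

Lemma two_in_Cl p0 (S : {set 'I_n}) e p q x :
  let A := cclass p0 in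
  q \in A -> p \in Cl A S e ->
  (forall z, q z = p z \/ (~~ bnd k (p z) /\ q z = rev_ord (p z))) ->
  q x != p x -> (2 <= #|Cl A S e|)%N.
Proof.
move=> A qA pCl Hz nx.
have qCl : q \in Cl A S e.
  move: pCl; rewrite !ClE qA => /and3P [_ /eqP BS /forallP H].
  have EB : Bset q = Bset p.
    apply/setP => s; rewrite !inB; case: (Hz s) => [->|[_ ->]] //.
    by rewrite bnd_rev.
  rewrite EB BS eqxx /=; apply/forallP => s; apply/implyP => sS.
  have := implyP (H s) sS; case: (Hz s) => [->|[nb _]] //.
  by move/eqP => E; move: nb; rewrite E epsv_bnd.
have npq : p != q by apply: contraNneq nx => ->.
have sub : [set p; q] \subset Cl A S e.
  by apply/subsetP => z; rewrite in_set2 => /orP [] /eqP ->.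
by have := subset_leq_card sub; rewrite cards2 npq.
Qed.

End Main.

Section Constr.
Variables k n : nat.
Hypothesis hk : (2 <= k)%N.
Hypothesis hn : (3 <= n)%N.
Implicit Types p q : pos k n.

Lemma good_bnd v : ~~ good k v -> ~~ bnd k v.
Proof. by rewrite /good /bnd; apply: contra => /orP [] ->; rewrite ?orbT. Qed.

Lemma exists_q p0 p x : p \in cclass p0 -> ~~ good k (p x) ->
  exists q, [/\ q \in cclass p0,
    (forall z, q z = p z \/ (~~ bnd k (p z) /\ q z = rev_ord (p z))) & q x != p x].
Proof.
move=> pA ng; have nbx := good_bnd ng.
case: (pickP (fun y => (y != x) && ~~ bnd k (p y))) => [y /andP [nyx nby] | Hall].
  have nxy : x != y by rewrite eq_sym.
  exists (psi x y (psi x y p)); split.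
  - by do 2 apply: cclass_psi => //.
  - move=> z; rewrite /psi !ffunE.
    case: (eqVneq z x) => [->|nzx]; first by right; split => //; rewrite !eqxx (negbTE nyx).
    case: (eqVneq z y) => [->|nzy]; first by right; split => //; rewrite !eqxx ?(negbTE nyx) ?(negbTE nxy).
    by left.
  - by rewrite /psi !ffunE eqxx (negbTE nyx) eqxx (rev_ne hk hn).
have {}Hall : forall y, y != x -> bnd k (p y).
  by move=> y nyx; have := Hall y; rewrite nyx /= => /negbFE.
have [j [l [njx nlx njl]]] := three hk hn x.
have nxj : x != j by rewrite eq_sym.
have nxl : x != l by rewrite eq_sym.
have nlj : l != j by rewrite eq_sym.
have bj := Hall j njx; have bl := Hall l nlx.
case: (eqVneq (p j : nat) (p l)) => [Ejl|Njl].
  exists (psi l j (psi x j (psi x j p))); split.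
  - apply: cclass_psi => //; do 2 apply: cclass_psi => //.
  - move=> z; rewrite /psi !ffunE.
    rewrite ?(negbTE njx) ?(negbTE nxj) ?(negbTE nlx) ?(negbTE nxl) ?(negbTE njl) ?(negbTE nlj) ?eqxx.
    case: (eqVneq z l) => [->|nzl]; first left.
    by rewrite rev_ordK; apply: val_inj.
    case: (eqVneq z j) => [->|nzj]; first by left; apply: val_inj => /=; rewrite Ejl.
    case: (eqVneq z x) => [->|nzx]; first by right.
    by left.
  - by rewrite /psi !ffunE (negbTE nxl) (negbTE nxj) eqxx (negbTE njx) eqxx (rev_ne hk hn).
have Elj : p l = rev_ord (p j).
  apply: val_inj => /=; move: bj bl Njl; rewrite /bnd; have := ltn_ord (p j); have := ltn_ord (p l); lia.
exists (psi j l (psi x j (psi x j p))); split.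
- apply: cclass_psi => //; do 2 apply: cclass_psi => //.
- move=> z; rewrite /psi !ffunE.
  rewrite ?(negbTE njx) ?(negbTE nxj) ?(negbTE nlx) ?(negbTE nxl) ?(negbTE njl) ?(negbTE nlj) ?eqxx.
  case: (eqVneq z j) => [->|nzj]; first by left; rewrite ?(negbTE njx) ?(negbTE nxj) ?(negbTE nlx) ?(negbTE nxl) ?(negbTE njl) ?(negbTE nlj) ?eqxx Elj !rev_ordK.
  case: (eqVneq z l) => [->|nzl]; first by left; rewrite Elj.
  case: (eqVneq z x) => [->|nzx]; first by right.
  by left.
- by rewrite /psi !ffunE (negbTE nxl) (negbTE nxj) eqxx (negbTE njx) eqxx (rev_ne hk hn).
Qed.

End Constr.

Section Fin.
Variables k n : nat.
Implicit Types p q : pos k n.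

Lemma central_mid (A : {set pos k n}) p x : central A -> p \in A -> x \notin Bset p ->
  (p x : nat).*2.+1 = k.
Proof.
move=> /forall_inP /(_ p) H pA nB; move: (H pA); rewrite /chars all_sort all_map.
move=> /allP /(_ x); rewrite mem_enum inE => /(_ nB) /eqP.
rewrite /bar -!addnn; have := ltn_ord (p x); lia.
Qed.

Lemma allgood_chars p : allgood p -> all (fun c => c.*2.+1 == k) (chars p).
Proof.
move/forallP => H; rewrite /chars all_sort all_map; apply/allP => x.
rewrite mem_enum inE inB => nb /=; have := H x; move: nb.
rewrite /good /bnd /bar -!addnn; have := ltn_ord (p x); lia.
Qed.

End Fin.

Theorem mainTheorem3 (k n : nat) (hk : (2 <= k)%N) (hn : (3 <= n)%N)
  (p0 : pos k n) (hp0 : external p0) :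
  let A := cclass p0 in
  let m := #|Bset p0| in
  (* A is the disjoint union of the sets Cl(S, eps), |S| = m *)
  (forall p, p \in A -> exists (S : {set 'I_n}) (e : 'I_n -> bool), #|S| = m /\ p \in Cl A S e) /\
  (forall (S : {set 'I_n}) (e : 'I_n -> bool), Cl A S e \subset A) /\
  (forall (S : {set 'I_n}) (e : 'I_n -> bool) (S' : {set 'I_n}) (e' : 'I_n -> bool) p, p \in Cl A S e -> p \in Cl A S' e' ->
       S = S' /\ {in S, e =1 e'}) /\
  (* same coloring iff same Cl(S, eps) *)
  (forall p q, p \in A -> q \in A ->
     (same_coloring p q <->
      exists (S : {set 'I_n}) (e : 'I_n -> bool), #|S| = m /\ p \in Cl A S e /\ q \in Cl A S e)) /\
  (* non-central: every nonempty Cl has at least two positions *)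
  (~~ central A -> forall (S : {set 'I_n}) (e : 'I_n -> bool), #|S| = m -> Cl A S e != set0 ->
       (2 <= #|Cl A S e|)%N) /\
  (* central: every nonempty Cl is a single position *)
  (central A -> forall (S : {set 'I_n}) (e : 'I_n -> bool), #|S| = m -> Cl A S e != set0 ->
       #|Cl A S e| = 1%N).
Proof.
move=> A m.
have cardA : forall p, p \in A -> #|Bset p| = m by move=> p; exact: card_B_inv.
split.
  move=> p pA; exists (Bset p), (esig p); split; [exact: cardA | exact: in_Cl_self].
split.
  by move=> S e; apply/subsetP => p; rewrite ClE => /and3P [].
split.
  move=> S e S' e' p; rewrite !ClE => /and3P [_ /eqP BS /forallP H] /and3P [_ /eqP BS' /forallP H'].
  split; first by rewrite -BS -BS'.
  move=> s sS; have sS' : s \in S' by rewrite -BS' BS.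
  apply: (epsv_inj hk hn).
  by rewrite -(eqP (implyP (H s) sS)) (eqP (implyP (H' s) sS')).
split.
  move=> p q pA qA; split.
  - move=> Hc; have Hq := sc_sub hk hn Hc.
    have Hp : same_coloring q p by move=> S e; exact: iff_sym (Hc S e).
    have Hp' := sc_sub hk hn Hp.
    have EB : Bset p = Bset q.
      apply/setP => s; apply/idP/idP => sB.
        by rewrite inB Hq // -inB.
      by rewrite inB Hp' // -inB.
    exists (Bset p), (esig p); split; [exact: cardA | split; first exact: in_Cl_self].
    rewrite ClE qA -EB eqxx /=; apply/forallP => s; apply/implyP => sB.
    by rewrite epsv_esig // Hq.
  - case=> S [e [_ [pC qC]]]; move: pC qC.
    rewrite !ClE => /and3P [_ /eqP BS /forallP H] /and3P [_ /eqP BS' /forallP H'].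
    move=> S' e'; split; apply: agree_color => //; rewrite ?BS ?BS' // => s sS.
      by rewrite (eqP (implyP (H s) sS)) (eqP (implyP (H' s) sS)).
    by rewrite (eqP (implyP (H s) sS)) (eqP (implyP (H' s) sS)).
split.
  move=> nc S e _ /set0Pn [p pC].
  have pA : p \in A by move: pC; rewrite ClE => /and3P [].
  have : ~~ allgood p.
    rewrite (allgood_inv pA).
    move: nc; rewrite /central negb_forall_in => /exists_inP [p' p'A nall].
    rewrite -(allgood_inv p'A); apply: contra nall; exact: allgood_chars.
  rewrite /allgood negb_forall => /existsP [x ng].
  have [q [qA Hz nx]] := exists_q hk hn pA ng.
  exact: two_in_Cl qA pC Hz nx.
move=> c S e _ /set0Pn [p pC].
suff -> : Cl A S e = [set p] by rewrite cards1.
apply/setP => q; rewrite in_set1; apply/idP/eqP => [qC | ->//].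
move: pC qC; rewrite !ClE => /and3P [pA /eqP BS /forallP H] /and3P [qA /eqP BS' /forallP H'].
apply/ffunP => x; apply: val_inj => /=.
case: (boolP (x \in S)) => xS.
  by rewrite (eqP (implyP (H x) xS)) (eqP (implyP (H' x) xS)).
have := central_mid c pA (_ : x \notin Bset p); rewrite BS => /(_ xS).
have := central_mid c qA (_ : x \notin Bset q); rewrite BS' => /(_ xS).
lia.
Qed.
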